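(* Let $n\ge1$, $0<\delta\le1/3$, $b=\delta n$ (a positive integer), $B=2^b$, $\eta>0$ with $B=\eta K$, and let $C\ge3$ be an integer with $Cb\le n$. Let $\mathcal{K}$ consist of $K$ indices chosen independently and uniformly at random from $\mathbb{F}_2^n$, and form the bipartite graph with left nodes $\mathcal{K}$, right nodes $\{(c,\mathbf{j}):c\in[C],\mathbf{j}\in\mathbb{F}_2^b\}$, and an edge between $\mathbf{k}$ and $(c,\mathcal{H}_c(\mathbf{k}))$ for each $c\in[C]$, where $\mathcal{H}_c(\mathbf{k})=(k[(c-1)b+1],\dots,k[cb])$. Then there is a sufficiently small constant $\varepsilon>0$ such that, with probability at least $1-O(1/K)$, this graph is an $(\varepsilon,1/2,C)$-expander.
   Context: A $C$-regular bipartite graph with $K$ left nodes and $C$ groups of $B=\eta K$ right nodes is an $(\varepsilon,1/2,C)$-expander if for every subset $\mathcal{S}$ of left nodes with $|\mathcal{S}|\le\varepsilon K$ there exists a group $c\in[C]$ such that the set $\mathcal{N}_c(\mathcal{S})$ of right nodes in group $c$ adjacent to $\mathcal{S}$ satisfies $|\mathcal{N}_c(\mathcal{S})|>|\mathcal{S}|/2$. Here $[C]=\{1,\dots,C\}$ and $\mathbf{k}=[k[1],\dots,k[n]]^T$. *)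

(* Defs.v *)
From HB Require Import structures.
From mathcomp Require Import all_boot all_order all_algebra.
Set Implicit Arguments. Unset Strict Implicit. Unset Printing Implicit Defensive.
Import Order.TTheory GRing.Theory Num.Theory.
Local Open Scope ring_scope.

(* An index k in F_2^n is an n-tuple of bits; entry k[i] (1-indexed in the
   paper) is nth false k (i-1).  Groups c in [C] are 0-indexed: c : 'I_C. *)

(* H_c(k) = (k[c b + 1], ..., k[(c+1) b])   (paper's c-1 is our c) *)
Definition hashc (n b : nat) (c : nat) (k : n.-tuple bool) : b.-tuple bool :=
  [tuple nth false k (c * b + j) | j < b].

Definition nbr (n b K : nat) (ks : {ffun 'I_K -> n.-tuple bool}) (c : nat)
    (S : {set 'I_K}) : {set b.-tuple bool} :=
  [set hashc b c (ks i) | i in S].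

Definition is_expander (R : realFieldType) (n b K C : nat) (eps : R)
    (ks : {ffun 'I_K -> n.-tuple bool}) : bool :=
  [forall S : {set 'I_K},
     ((S != set0) && (#|S|%:R <= eps * K%:R))
       ==> [exists c : 'I_C, (#|S| < 2 * #|nbr b ks c S|)%N]].

Definition prob_expander (R : realFieldType) (n b K C : nat) (eps : R) : R :=
  #|[set ks : {ffun 'I_K -> n.-tuple bool} | is_expander b C eps ks]|%:R
  / #|{ffun 'I_K -> n.-tuple bool}|%:R.

(* Main.v *)
Require Import Defs.
From HB Require Import structures.
From mathcomp Require Import all_boot all_order all_algebra.
From mathcomp Require Import zify ring lra.
Import Order.TTheory GRing.Theory Num.Theory.


Lemma expn_mono a b e : a <= b -> a ^ e <= b ^ e.
Proof. by move=> ab; elim: e => // e IH; rewrite !expnS leq_mul. Qed.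

Lemma ffact_le n m : n ^_ m <= n ^ m.
Proof.
elim: m n => [|m IH] n //.
rewrite ffactnS expnS leq_mul //; apply: leq_trans (IH _) _; apply: expn_mono; exact: leq_pred.
Qed.

Lemma exp2_fact i : 2 ^ i <= 2 * i`!.
Proof.
elim: i => [|i IH] //.
rewrite expnS factS.
have := fact_gt0 i.
case: i IH => [|i] IH //= H. nia.
Qed.

Lemma binS_bound s i : i <= s -> 'C(s, i) * 2 ^ i * s ^ (s - i) <= 2 * s ^ s.
Proof.
move=> hi.
have h1 : 'C(s, i) * 2 ^ i <= 2 * s ^ i.
  rewrite -(leq_pmul2r (fact_gt0 i)).
  have := bin_ffact s i; have := ffact_le s i; have := exp2_fact i.
  move=> a b c. nia.
have -> : s ^ s = s ^ i * s ^ (s - i) by rewrite -expnD subnKC.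
by rewrite mulnA leq_mul2r h1 orbT.
Qed.

Lemma geom2 m : \sum_(i < m.+1) 2 ^ (m - i) < 2 ^ m.+1.
Proof.
rewrite (reindex_inj rev_ord_inj) /=.
rewrite (eq_bigr (fun i : 'I_m.+1 => 2 ^ i)); last first.
  by move=> i _; rewrite subKn // -ltnS.
elim: m => [|m IH]; first by rewrite big_ord1.
rewrite big_ord_recr /= expnS. 
rewrite !expnS in IH *. lia.
Qed.

Lemma succ_pow s : s.+1 ^ s <= 4 * s ^ s.
Proof.
have E : 2 ^ s * s.+1 ^ s = \sum_(i < s.+1) 'C(s, i) * ((2 * s) ^ (s - i) * 2 ^ i).
  by rewrite -expnDn -expnMn; congr (_ ^ _); rewrite mulnS addnC.
have H : \sum_(i < s.+1) 'C(s, i) * ((2 * s) ^ (s - i) * 2 ^ i)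
         <= \sum_(i < s.+1) 2 * s ^ s * 2 ^ (s - i).
  apply: leq_sum => i _.
  have hi : (i <= s)%N by rewrite -ltnS.
  rewrite expnMn (mulnC (2 ^ (s - i))) !mulnA.
  have := binS_bound s i hi; nia.
rewrite -big_distrr /= in H.
have G := geom2 s.
rewrite -(leq_pmul2l (expn_gt0 2 s)) E.
apply: (leq_trans H).
rewrite expnS in G.
have : 2 * s ^ s * \sum_(i < s.+1) 2 ^ (s - i) <= 2 * s ^ s * (2 * 2 ^ s).
  by rewrite leq_mul2l ltnW // orbT.
move=> h; apply: (leq_trans h); lia.
Qed.

Lemma pow_fact s : s ^ s <= 4 ^ s * s`!.
Proof.
elim: s => // s IH.
have h := succ_pow s.
rewrite expnS factS expnS.
have h2 : s.+1 ^ s <= 4 * (4 ^ s * s`!) by apply: leq_trans h _; rewrite leq_mul2l IH orbT.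
have := leq_mul (leqnn s.+1) h2. lia.
Qed.

Lemma binK_bound K s : 'C(K, s) * s ^ s <= 4 ^ s * K ^ s.
Proof.
apply: (leq_trans (leq_mul (leqnn _) (pow_fact s))).
rewrite mulnCA bin_ffact leq_mul2l ffact_le orbT //.
Qed.

Lemma hb_lem B t u s : s = t + u -> t <= u ->
  'C(B, t) * t ^ s <= (2 * s) ^ u * B ^ t.
Proof.
move=> es tu.
have h1 := binK_bound B t.
have h4 : 4 ^ t <= 4 ^ u by apply: leq_pexp2l.
have h2 : (4 * t) ^ u <= (2 * s) ^ u by apply: expn_mono; lia.
rewrite expnMn in h2.
have -> : t ^ s = t ^ t * t ^ u by rewrite es expnD.
rewrite mulnA.
apply: leq_trans (leq_mul h1 (leqnn (t ^ u))) _.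
rewrite mulnAC.
apply: leq_trans (leq_mul (leq_mul h4 (leqnn (t ^ u))) (leqnn (B ^ t))) _.
exact: leq_mul h2 (leqnn _).
Qed.

Lemma ha_lem K u s : s <= 2 * u -> s <= K ->
  'C(K, s) * s ^ (2 * u) <= 16 ^ u * K ^ (2 * u).
Proof.
move=> su sK.
have h1 := binK_bound K s.
have e1 : s ^ (2 * u) = s ^ s * s ^ (2 * u - s) by rewrite -expnD subnKC.
have e2 : K ^ (2 * u) = K ^ s * K ^ (2 * u - s) by rewrite -expnD subnKC.
have h3 : s ^ (2 * u - s) <= K ^ (2 * u - s) by apply: expn_mono.
have h4 : 4 ^ s <= 16 ^ u by rewrite -[16]/(4 ^ 2) -expnM leq_pexp2l.
rewrite e1 e2 mulnA.
apply: leq_trans (leq_mul h1 h3) _.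
by rewrite -mulnA leq_mul2r h4 orbT.
Qed.

Lemma s2s_lem s w : s <= 2 * w.+1 -> s * 2 ^ s <= 8 * 32 ^ w.
Proof.
move=> sw.
apply: (@leq_trans ((2 * w.+1) * 2 ^ (2 * w.+1))).
  by apply: leq_mul => //; apply: leq_pexp2l.
have -> : 2 ^ (2 * w.+1) = 4 * 4 ^ w by rewrite mulnS expnD expnM.
have h : w.+1 <= 8 ^ w by apply: leq_trans (ltn_expl w (isT : 1 < 2)) _; apply: expn_mono.
have -> : 32 ^ w = 4 ^ w * 8 ^ w by rewrite -expnMn.
have hh := leq_mul (leqnn (4 ^ w)) h.
nia.
Qed.

Lemma fin_lem K B s w : s * 2 ^ s <= 8 * 32 ^ w -> 4096 * s * K ^ 2 <= B ^ 3 ->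
  K * (128 * s * K ^ 2) ^ w.+1 * 2 ^ s * B ^ 3 <= 1024 * K ^ 3 * (B ^ 3) ^ w.+1.
Proof.
move=> hs H.
have hZ : 32 ^ w * (128 * s * K ^ 2) ^ w <= (B ^ 3) ^ w.
  by rewrite -expnMn; apply: expn_mono; nia.
have h2 : 128 * s * 2 ^ s * (128 * s * K ^ 2) ^ w <= 1024 * (B ^ 3) ^ w.
  have ? := leq_mul (leqnn (128 * (128 * s * K ^ 2) ^ w)) hs.
  have ? := leq_mul (leqnn 1024) hZ.
  nia.
rewrite (expnS (128 * s * K ^ 2) w) (expnS (B ^ 3) w).
have hh := leq_mul (leqnn (K ^ 3 * B ^ 3)) h2.
have e : K ^ 3 = K * K ^ 2 by rewrite (expnS K 2).
rewrite e in hh *.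
clear -hh; move: hh; move: (K ^ 2) (2 ^ s) ((128 * s * K ^ 2) ^ w) (B ^ 3) ((B ^ 3) ^ w) => a b c d f hh.
nia.
Qed.

Lemma core K B t u s : s = t + u -> 0 < K -> t <= u -> u <= t.+1 -> 0 < u -> s <= K ->
  4096 * s * K ^ 2 <= B ^ 3 ->
  K * 'C(K, s) * ('C(B, t) * t ^ s) ^ 3 * 2 ^ s * B ^ 3 <= 1024 * K ^ 3 * B ^ (3 * s).
Proof.
move=> es K0 tu ut u0 sK H.
have s0 : 0 < s by lia.
have B0 : 0 < B.
  have K2 : 0 < K ^ 2 by rewrite expn_gt0 K0.
  have : 0 < B ^ 3.
    apply: leq_trans H. by rewrite muln_gt0 K2 andbT muln_gt0 s0.
  by rewrite expn_gt0 orbF.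
have hb := hb_lem B t u s es tu.
have ha := ha_lem K u s ltac:(lia) sK.
case: u u0 ut tu es ha hb => // w _ ut tu es ha hb.
have hs := s2s_lem s w ltac:(lia).
have hf := fin_lem K B s w hs H.
set P := (2 * s) ^ w.+1 in hb *.
have Y3 : ('C(B, t) * t ^ s) ^ 3 <= P ^ 3 * (B ^ t) ^ 3.
  by rewrite -expnMn; apply: expn_mono.
have eB : B ^ (3 * s) = (B ^ t) ^ 3 * (B ^ 3) ^ w.+1.
  by rewrite es mulnDr expnD -!expnM (mulnC t 3).
have eI : 16 ^ w.+1 * K ^ (2 * w.+1) * P ^ 3 = (128 * s * K ^ 2) ^ w.+1 * s ^ (2 * w.+1).
  rewrite /P (expnM K 2) (expnM s 2) -(expnM _ w.+1 3) (mulnC w.+1 3) (expnM _ 3) -!expnMn.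
  congr (_ ^ _); ring.
have Q : K * 'C(K, s) * P ^ 3 * 2 ^ s * B ^ 3 <= 1024 * K ^ 3 * (B ^ 3) ^ w.+1.
  have S0 : 0 < s ^ (2 * w.+1) by rewrite expn_gt0 s0.
  rewrite -(leq_pmul2r S0).
  have -> : K * 'C(K, s) * P ^ 3 * 2 ^ s * B ^ 3 * s ^ (2 * w.+1)
          = ('C(K, s) * s ^ (2 * w.+1)) * (K * P ^ 3 * 2 ^ s * B ^ 3) by ring.
  apply: leq_trans (leq_mul ha (leqnn _)) _.
  have -> : 16 ^ w.+1 * K ^ (2 * w.+1) * (K * P ^ 3 * 2 ^ s * B ^ 3)
          = (16 ^ w.+1 * K ^ (2 * w.+1) * P ^ 3) * (K * 2 ^ s * B ^ 3) by ring.
  rewrite eI.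
  have -> : (128 * s * K ^ 2) ^ w.+1 * s ^ (2 * w.+1) * (K * 2 ^ s * B ^ 3)
          = (K * (128 * s * K ^ 2) ^ w.+1 * 2 ^ s * B ^ 3) * s ^ (2 * w.+1) by ring.
  by rewrite leq_mul2r hf orbT.
rewrite eB.
apply: (@leq_trans (K * 'C(K, s) * (P ^ 3 * (B ^ t) ^ 3) * 2 ^ s * B ^ 3)).
  by rewrite leq_mul2r leq_mul2r leq_mul2l Y3 !orbT.
have -> : K * 'C(K, s) * (P ^ 3 * (B ^ t) ^ 3) * 2 ^ s * B ^ 3
        = (K * 'C(K, s) * P ^ 3 * 2 ^ s * B ^ 3) * (B ^ t) ^ 3 by ring.
have -> : 1024 * K ^ 3 * ((B ^ t) ^ 3 * (B ^ 3) ^ w.+1)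
        = (1024 * K ^ 3 * (B ^ 3) ^ w.+1) * (B ^ t) ^ 3 by ring.
by rewrite leq_mul2r Q orbT.
Qed.

Lemma card_bigcup_le (I T : finType) (P : pred I) (F : I -> {set T}) :
  #|\bigcup_(i | P i) F i| <= \sum_(i | P i) #|F i|.
Proof.
apply: (big_ind2 (fun (A : {set T}) m => #|A| <= m)) => //.
- by rewrite cards0.
- move=> A1 m1 A2 m2 h1 h2; apply: leq_trans (leq_add h1 h2).
  by rewrite cardsU leq_subr.
Qed.

Lemma superset (T : finType) (A : {set T}) k :
  #|A| <= k -> k <= #|T| -> exists2 B : {set T}, A \subset B & #|B| == k.
Proof.
elim: k A => [|k IH] A hA hk.
  by exists A => //; rewrite -leqn0.
have [e|ne] := eqVneq #|A| k.+1; first by exists A => //; rewrite e.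
have hA' : #|A| <= k by rewrite -ltnS ltn_neqAle ne hA.
have [B AB /eqP cB] := IH A hA' (ltnW hk).
have /subsetPn [x _ xB] : ~~ ([set: T] \subset B).
  apply/negP => /subset_leq_card; rewrite cardsT; lia.
exists (x |: B); first by apply: subset_trans AB (subsetUr _ _).
by rewrite cardsU1 xB cB.
Qed.

Lemma hashc_nth n b c (x : n.-tuple bool) r (hr : r < b) :
  tnth (hashc b c x) (Ordinal hr) = nth false x (c * b + r).
Proof. by rewrite /hashc tnth_mktuple. Qed.

Definition restt n b (x : n.-tuple bool) : (n - 3 * b).-tuple bool :=
  [tuple nth false x (3 * b + j) | j < n - 3 * b].

Definition Aset n b (T0 T1 T2 : {set b.-tuple bool}) : {set n.-tuple bool} :=
  [set x : n.-tuple bool | [&& hashc b 0 x \in T0, hashc b 1 x \in T1 & hashc b 2 x \in T2]].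

Lemma cardA n b (T0 T1 T2 : {set b.-tuple bool}) : 0 < b -> 3 * b <= n ->
  #|Aset n b T0 T1 T2| <= #|T0| * #|T1| * #|T2| * 2 ^ (n - 3 * b).
Proof.
move=> b0 hn.
pose f (x : n.-tuple bool) := (hashc b 0 x, hashc b 1 x, hashc b 2 x, restt n b x).
have finj : injective f.
  move=> x y E.
  have e0 : hashc b 0 x = hashc b 0 y := congr1 (fun p => p.1.1.1) E.
  have e1 : hashc b 1 x = hashc b 1 y := congr1 (fun p => p.1.1.2) E.
  have e2 : hashc b 2 x = hashc b 2 y := congr1 (fun p => p.1.2) E.
  have e3 : restt n b x = restt n b y := congr1 (fun p => p.2) E.
  have key : forall c, c < 3 -> hashc b c x = hashc b c y.
    by case=> [|[|[|c]]].
  apply: eq_from_tnth => j; rewrite !(tnth_nth false).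
  have [jl|jg] := ltnP j (3 * b).
    have cl : j %/ b < 3 by rewrite ltn_divLR // mulnC.
    have rl : j %% b < b by rewrite ltn_pmod.
    rewrite (divn_eq j b) -!(hashc_nth _ _ _ _ _ rl).
    by rewrite (key _ cl).
  have jl : j - 3 * b < n - 3 * b by have := ltn_ord j; lia.
  have := congr1 (fun t => tnth t (Ordinal jl)) e3.
  rewrite /restt !tnth_mktuple /= subnKC //.
rewrite -(card_in_imset (f := f) (D := Aset n b T0 T1 T2)); last by move=> x y _ _; apply: finj.
apply: (@leq_trans #|setX (setX (setX T0 T1) T2) [set: (n - 3 * b).-tuple bool]|).
  apply: subset_leq_card; apply/subsetP => p /imsetP [x].
  rewrite inE => /and3P [h0 h1 h2] ->.
  by rewrite !inE h0 h1 h2.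
by rewrite !cardsX cardsT card_tuple card_bool.
Qed.

Lemma card_forall_in (K : nat) (X : finType) (S : {set 'I_K}) (A : {set X}) :
  #|[set ks : {ffun 'I_K -> X} | [forall i in S, ks i \in A]]|
  = #|A| ^ #|S| * #|X| ^ (K - #|S|).
Proof.
pose F := fun i : 'I_K => [pred x : X | (i \notin S) || (x \in A)].
rewrite (@eq_card _ _ (family F)); last first.
  move=> ks; rewrite inE; apply/forall_inP/familyP => H i.
    by rewrite /F inE; case: (boolP (i \in S)) => // /H.
  by move=> iS; have := H i; rewrite /F inE iS.
rewrite card_family foldrE big_map big_enum /=.
rewrite (bigID (mem S)) /=.
rewrite [Y in Y * _](eq_bigr (fun _ => #|A|)); last first.
  by move=> i iS; apply: eq_card => x; rewrite unfold_in /= iS.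
rewrite [Y in _ * Y](eq_bigr (fun _ => #|X|)); last first.
  by move=> i iS; apply: eq_card => x; rewrite unfold_in /= iS.
rewrite [Y in _ * Y](eq_bigl (mem (~: S))); last by move=> i; rewrite !inE.
rewrite !prod_nat_const.
congr (_ * _ ^ _).
have := cardsC S; rewrite card_ord => h.
apply/eqP; rewrite -(eqn_add2l #|S|) h subnKC //.
by rewrite -[K in _ <= K]card_ord max_card.
Qed.

Definition Eset n b K (S : {set 'I_K}) (T0 T1 T2 : {set b.-tuple bool})
  : {set {ffun 'I_K -> n.-tuple bool}} :=
  [set ks : {ffun 'I_K -> n.-tuple bool} | [forall i in S, ks i \in Aset n b T0 T1 T2]].

Definition Dt b s : {set {set b.-tuple bool}} := [set T : {set b.-tuple bool} | #|T| == s./2].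

Lemma card_E n b K (S : {set 'I_K}) T0 T1 T2 s :
  0 < b -> 3 * b <= n -> #|S| = s ->
  T0 \in Dt b s -> T1 \in Dt b s -> T2 \in Dt b s ->
  #|Eset n b K S T0 T1 T2| <= ((s./2) ^ 3 * 2 ^ (n - 3 * b)) ^ s * (2 ^ n) ^ (K - s).
Proof.
move=> b0 hn cS h0 h1 h2.
rewrite /Eset card_forall_in card_tuple card_bool cS leq_mul2r; apply/orP; right.
apply: expn_mono; apply: leq_trans (cardA n b T0 T1 T2 b0 hn) _.
move: h0 h1 h2; rewrite !inE => /eqP -> /eqP -> /eqP ->.
by rewrite (expnS _ 2) (expnS _ 1) expn1 !mulnA.
Qed.

Lemma card_inner n b K s : 0 < b -> 3 * b <= n ->
  #|\bigcup_(S in [set S : {set 'I_K} | #|S| == s]) \bigcup_(T0 in Dt b s)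
     \bigcup_(T1 in Dt b s) \bigcup_(T2 in Dt b s) Eset n b K S T0 T1 T2|
  <= 'C(K, s) * ('C(2 ^ b, s./2) * ('C(2 ^ b, s./2) * ('C(2 ^ b, s./2) *
       (((s./2) ^ 3 * 2 ^ (n - 3 * b)) ^ s * (2 ^ n) ^ (K - s))))).
Proof.
move=> b0 hn.
have cD : #|Dt b s| = 'C(2 ^ b, s./2) by rewrite /Dt card_draws card_tuple card_bool.
have cS : #|[set S : {set 'I_K} | #|S| == s]| = 'C(K, s) by rewrite card_draws card_ord.
apply: leq_trans (card_bigcup_le _ _ _ _) _.
rewrite -cS -sum_nat_const; apply: leq_sum => S; rewrite inE => /eqP hS.
rewrite -cD.
apply: leq_trans (card_bigcup_le _ _ _ _) _.
rewrite -sum_nat_const; apply: leq_sum => T0 h0.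
apply: leq_trans (card_bigcup_le _ _ _ _) _.
rewrite -sum_nat_const; apply: leq_sum => T1 h1.
apply: leq_trans (card_bigcup_le _ _ _ _) _.
rewrite -sum_nat_const; apply: leq_sum => T2 h2.
exact: card_E.
Qed.

Lemma half_facts s : [/\ s = s./2 + (s - s./2), s./2 <= s - s./2 & s - s./2 <= (s./2).+1].
Proof.
have := odd_double_half s; rewrite -mul2n; case: (odd s) => /= h; split; lia.
Qed.

Lemma term_bound K b n s : 0 < K -> 0 < s -> s <= K -> 3 * b <= n ->
  4096 * s * K ^ 2 <= (2 ^ b) ^ 3 ->
  'C(K, s) * ('C(2 ^ b, s./2) * ('C(2 ^ b, s./2) * ('C(2 ^ b, s./2) *
       (((s./2) ^ 3 * 2 ^ (n - 3 * b)) ^ s * (2 ^ n) ^ (K - s))))) * 2 ^ s * (2 ^ b) ^ 3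
  <= 1024 * K ^ 2 * (2 ^ n) ^ K.
Proof.
move=> K0 s0 sK hn H.
have [es tu ut] := half_facts s.
have u0 : 0 < s - s./2 by lia.
have hc := core K (2 ^ b) (s./2) (s - s./2) s es K0 tu ut u0 sK H.
set B := 2 ^ b in hc H *.
set t := s./2 in hc es tu ut *.
have e1 : (2 ^ n) ^ K = (2 ^ (n - 3 * b)) ^ s * (B ^ 3) ^ s * (2 ^ n) ^ (K - s).
  have eB3 : B ^ 3 = 2 ^ (3 * b) by rewrite /B -expnM mulnC.
  by rewrite eB3 -expnMn -expnD subnK // -expnD subnKC.
have e2 : B ^ (3 * s) = (B ^ 3) ^ s by rewrite expnM.
have e3 : (t ^ 3 * 2 ^ (n - 3 * b)) ^ s = (t ^ s) ^ 3 * (2 ^ (n - 3 * b)) ^ s.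
  by rewrite expnMn -!expnM (mulnC 3 s).
have KB : 0 < K * B ^ (3 * s) by rewrite muln_gt0 K0 expn_gt0 expn_gt0.
rewrite -(leq_pmul2r KB) e3 e1 e2.
rewrite e2 in hc.
set Z := (B ^ 3) ^ s in hc *.
set W := (2 ^ (n - 3 * b)) ^ s.
set V := (2 ^ n) ^ (K - s).
have -> : 'C(K, s) * ('C(B, t) * ('C(B, t) * ('C(B, t) * ((t ^ s) ^ 3 * W * V)))) * 2 ^ s * B ^ 3 *
    (K * Z) = (K * 'C(K, s) * ('C(B, t) * t ^ s) ^ 3 * 2 ^ s * B ^ 3) * (W * Z * V) by ring.
have -> : 1024 * K ^ 2 * (W * Z * V) * (K * Z) = (1024 * K ^ 3 * Z) * (W * Z * V) by ring.
by rewrite leq_mul2r hc orbT.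
Qed.

Lemma bad_count (R : realFieldType) (eps : R) n b K C :
  0 < K -> 0 < b -> 3 <= C -> 3 * b <= n ->
  (forall s : nat, (s%:R <= eps * K%:R)%R -> 4096 * s * K ^ 2 <= (2 ^ b) ^ 3 /\ s <= 2 ^ b) ->
  #|~: [set ks : {ffun 'I_K -> n.-tuple bool} | is_expander b C eps ks]| * (2 ^ b) ^ 3
    <= 2048 * K ^ 2 * (2 ^ n) ^ K.
Proof.
move=> K0 b0 C3 hn hs.
pose P := fun s : 'I_K.+1 => (0 < s) && (s%:R <= eps * K%:R)%R.
pose U := \bigcup_(s < K.+1 | P s) \bigcup_(S in [set S : {set 'I_K} | #|S| == s])
   \bigcup_(T0 in Dt b s) \bigcup_(T1 in Dt b s) \bigcup_(T2 in Dt b s) Eset n b K S T0 T1 T2.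
pose term := fun s : nat => 'C(K, s) * ('C(2 ^ b, s./2) * ('C(2 ^ b, s./2) * ('C(2 ^ b, s./2) *
       (((s./2) ^ 3 * 2 ^ (n - 3 * b)) ^ s * (2 ^ n) ^ (K - s))))).
have cover : ~: [set ks : {ffun 'I_K -> n.-tuple bool} | is_expander b C eps ks] \subset U.
  apply/subsetP => ks; rewrite in_setC inE /is_expander negb_forall => /existsP [S].
  rewrite negb_imply => /andP [/andP [Sne Sle] nex].
  rewrite negb_exists in nex; move/forallP: nex => nex.
  have sK : #|S| < K.+1 by rewrite ltnS -[X in _ <= X]card_ord max_card.
  have s0 : 0 < #|S| by rewrite card_gt0.
  have [H sB] := hs _ Sle.
  have hhalf : forall c : 'I_C, #|nbr b ks c S| <= #|S|./2.
    move=> c; have := nex c; rewrite -leqNgt => h; have := half_leq h.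
    by rewrite mul2n doubleK.
  have tB : #|S|./2 <= #|{: b.-tuple bool}|.
    rewrite card_tuple card_bool; apply: leq_trans sB.
    by have [? ? ?] := half_facts #|S|; lia.
  have c0 : 0 < C by lia.
  have c1 : 1 < C by lia.
  have c2 : 2 < C by lia.
  have [T0 sub0 cT0] := superset _ _ _ (hhalf (Ordinal c0)) tB.
  have [T1 sub1 cT1] := superset _ _ _ (hhalf (Ordinal c1)) tB.
  have [T2 sub2 cT2] := superset _ _ _ (hhalf (Ordinal c2)) tB.
  apply/bigcupP; exists (Ordinal sK); first by rewrite /P /= s0 Sle.
  apply/bigcupP; exists S; first by rewrite inE.
  apply/bigcupP; exists T0; first by rewrite inE.
  apply/bigcupP; exists T1; first by rewrite inE.
  apply/bigcupP; exists T2; first by rewrite inE.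
  rewrite inE; apply/forall_inP => i iS; rewrite inE.
  apply/and3P; split; [apply: (subsetP sub0) | apply: (subsetP sub1) | apply: (subsetP sub2)];
    exact: imset_f.
have cU : #|U| <= \sum_(s < K.+1 | P s) term s.
  apply: leq_trans (card_bigcup_le _ _ _ _) _; apply: leq_sum => s _; exact: card_inner.
have hterm : forall s : 'I_K.+1, P s -> term s * 2 ^ s * (2 ^ b) ^ 3 <= 1024 * K ^ 2 * (2 ^ n) ^ K.
  move=> s /andP [s0 hsR]; have [H _] := hs s hsR.
  by apply: term_bound => //; rewrite -ltnS.
rewrite -(leq_pmul2r (expn_gt0 2 K)) /=.
apply: (@leq_trans (\sum_(s < K.+1 | P s) term s * (2 ^ b) ^ 3 * 2 ^ K)).
  rewrite -!big_distrl /= !leq_mul2r; apply/orP; right; apply/orP; right.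
  exact: leq_trans (subset_leq_card cover) cU.
apply: (@leq_trans (\sum_(s < K.+1) 1024 * K ^ 2 * (2 ^ n) ^ K * 2 ^ (K - s))).
  rewrite big_mkcond; apply: leq_sum => s _; case: ifP => // Ps.
  have sK : s <= K by rewrite -ltnS.
  have e : 2 ^ K = 2 ^ s * 2 ^ (K - s) by rewrite -expnD subnKC.
  rewrite e mulnA -(mulnAC _ (2 ^ s)) leq_mul2r; apply/orP; right.
  exact: hterm.
rewrite -big_distrr /=.
have := geom2 K; rewrite expnS => g.
have : 1024 * K ^ 2 * (2 ^ n) ^ K * \sum_(i < K.+1) 2 ^ (K - i) <= 1024 * K ^ 2 * (2 ^ n) ^ K * (2 * 2 ^ K).
  by rewrite leq_mul2l ltnW ?orbT.
move=> h; apply: leq_trans h _.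
by rewrite !mulnA leq_mul2r (mulnC _ 2) !mulnA leqnn orbT.
Qed.

Local Open Scope ring_scope.

Theorem lemma4 (R : realFieldType) (delta eta : R) (C : nat) :
  0 < delta -> delta <= 3^-1 -> 0 < eta -> (3 <= C)%N ->
  exists eps : R, 0 < eps /\
  exists M : R, forall n b K : nat,
    (1 <= n)%N -> (0 < b)%N -> b%:R = delta * n%:R ->
    (2 ^ b)%:R = eta * K%:R -> (C * b <= n)%N ->
    1 - M / K%:R <= prob_expander n b K C eps.
Proof.
move=> hd hd3 he hC.
pose eps := eta ^+ 3 / (4096 * (1 + eta ^+ 2)).
have den0 : 0 < 4096 * (1 + eta ^+ 2) :> R by nra.
have eps0 : 0 < eps by rewrite divr_gt0 // exprn_gt0.
have h3 : 0 <= eta ^+ 3 by rewrite exprn_ge0 // ltW.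
have h2 : 0 <= eta ^+ 2 by rewrite exprn_ge0 // ltW.
have e1 : 4096 * eps <= eta ^+ 3.
  rewrite /eps mulrA ler_pdivrMr //.
  have := mulr_ge0 h3 h2; nra.
have e2 : eps <= eta.
  rewrite /eps ler_pdivrMr //.
  have -> : eta ^+ 3 = eta * eta ^+ 2 by rewrite exprS.
  have := mulr_ge0 (ltW he) h2; nra.
exists eps; split => //.
exists (2048 / eta ^+ 3).
move=> n b K hn hb hbd hBK hCb.
have K0 : (0 < K)%N.
  rewrite lt0n; apply/eqP => K0.
  have : (2 ^ b)%:R != 0 :> R by rewrite pnatr_eq0 expn_eq0.
  by rewrite hBK K0 mulr0 eqxx.
have h3b : (3 * b <= n)%N by apply: leq_trans hCb; rewrite leq_mul2r hC orbT.
have Kp : 0 <= K%:R :> R by apply: ler0n.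
have hs : forall s : nat, s%:R <= eps * K%:R ->
    (4096 * s * K ^ 2 <= (2 ^ b) ^ 3)%N /\ (s <= 2 ^ b)%N.
  move=> s hsR; split; rewrite -(ler_nat R).
    rewrite !natrM hBK.
    have a1 : 4096 * s%:R <= 4096 * eps * K%:R :> R by rewrite -mulrA ler_wpM2l.
    have a2 : 4096 * eps * K%:R <= eta ^+ 3 * K%:R :> R by rewrite ler_wpM2r.
    have a3 := ler_wpM2r (mulr_ge0 Kp Kp) (le_trans a1 a2).
    apply: le_trans a3 _.
    have -> : eta * K%:R * (eta * K%:R * (eta * K%:R)) = eta ^+ 3 * K%:R * (K%:R * K%:R) by ring.
    by [].
  by rewrite hBK; apply: le_trans hsR _; rewrite ler_wpM2r.
have hbad := bad_count R eps n b K C K0 hb hC h3b hs.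
rewrite /prob_expander.
set G := [set ks : {ffun 'I_K -> n.-tuple bool} | is_expander b C eps ks] in hbad *.
have hN : #|{ffun 'I_K -> n.-tuple bool}| = ((2 ^ n) ^ K)%N.
  by rewrite card_ffun card_tuple card_bool card_ord.
have hGN : (#|G| + #|~: G| = (2 ^ n) ^ K)%N.
  by rewrite cardsC card_ffun card_tuple card_bool card_ord.
rewrite hN.
set a := #|~: G| in hbad hGN *.
set N := ((2 ^ n) ^ K)%N in hbad hGN *.
have N0 : 0 < N%:R :> R by rewrite ltr0n /N expn_gt0 expn_gt0.
have eG : (#|G|%:R : R) = N%:R - a%:R by rewrite -hGN natrD addrK.
rewrite eG mulrBl divff ?gt_eqF //.
apply: lerB (lexx 1) _.
have hb' : a%:R * (eta * K%:R) ^+ 3 <= 2048 * K%:R ^+ 2 * N%:R :> R.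
  move: hbad; rewrite -(ler_nat R) natrM natrX hBK !natrM natrX //.
have KR0 : 0 < K%:R :> R by rewrite ltr0n.
have eK0 : 0 < (eta * K%:R) ^+ 3 by rewrite exprn_gt0 // mulr_gt0.
rewrite ler_pdivrMr //.
have : a%:R <= 2048 * K%:R ^+ 2 * N%:R / (eta * K%:R) ^+ 3 by rewrite ler_pdivlMr.
move=> h; apply: le_trans h _.
have -> : 2048 * K%:R ^+ 2 * N%:R / (eta * K%:R) ^+ 3 = 2048 / eta ^+ 3 / K%:R * N%:R.
  field; rewrite ?gt_eqF //.
by [].
Qed.
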